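(* Two elements of $SB_n$ are conjugate if and only if their summit sets are identical.
   Context: Fix $n\ge 2$. $SB_n$ is the monoid with generators $\sigma_i,\sigma_i^{-1},x_i$ ($i=1,\dots,n-1$) and relations: $\sigma_i\sigma_j=\sigma_j\sigma_i$ and $x_ix_j=x_jx_i$ if $|i-j|>1$; $x_i\sigma_j=\sigma_jx_i$ if $|i-j|\ne1$; $\sigma_i\sigma_{i+1}\sigma_i=\sigma_{i+1}\sigma_i\sigma_{i+1}$; $\sigma_i\sigma_{i+1}x_i=x_{i+1}\sigma_i\sigma_{i+1}$; $\sigma_{i+1}\sigma_ix_{i+1}=x_i\sigma_{i+1}\sigma_i$; $\sigma_i\sigma_i^{-1}=\sigma_i^{-1}\sigma_i=1$. Two elements $u,v\in SB_n$ are conjugate if $v=g^{-1}ug$ for some invertible $g\in SB_n$ (equivalently $g$ in the image of the braid group, generated by $\sigma_i^{\pm1}$). $SB_n^+$ is the monoid with generators $\sigma_i,x_i$ and all relations except the last; $\doteq$ denotes equality in $SB_n^+$. $\Delta=\sigma_1\cdots\sigma_{n-1}\,\sigma_1\cdots\sigma_{n-2}\cdots\sigma_1\sigma_2\,\sigma_1$. Every element $W$ of $SB_n$ has a unique Garside (left) normal form $W=\Delta^m\overline{A}$, where $m\in\mathbb Z$ (the power of $W$) and $\overline{A}$ is a positive word (in $\sigma_i,x_i$) that is not positively equal to $\Delta Z$ for any positive $Z$ and is the lexicographically smallest positive word positively equal to itself, for the order $\sigma_1<\cdots<\sigma_{n-1}<x_1<\cdots<x_{n-1}$. The summit power of $W$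 is the maximum of the powers of all elements conjugate to $W$ (this maximum exists), and the summit set of $W$ is the set of Garside normal forms $\Delta^m\overline{A}$ of the elements conjugate to $W$ whose power $m$ equals the summit power. *)

(* Defs.v *)
From mathcomp Require Import all_boot all_order all_algebra.
Set Implicit Arguments. Unset Strict Implicit. Unset Printing Implicit Defensive.
Import Order.TTheory GRing.Theory Num.Theory.

(* Letters over index type 'I_k, with k = n - 1: the ordinal i stands for the
   generator with (1-based) index i+1. *)
Inductive letter (k : nat) : Type :=
| Sg of 'I_k
| Si of 'I_k    (* sigma_{i+1}^{-1} *)
| Xg of 'I_k.

Definition word (k : nat) := seq (letter k).

Inductive cong (T : Type) (R : seq T -> seq T -> Prop) : seq T -> seq T -> Prop :=
| cong_refl w : cong R w w
| cong_sym w1 w2 : cong R w1 w2 -> cong R w2 w1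
| cong_trans w1 w2 w3 : cong R w1 w2 -> cong R w2 w3 -> cong R w1 w3
| cong_step a b l r : R l r -> cong R (a ++ l ++ b) (a ++ r ++ b).

Definition far (k : nat) (i j : 'I_k) : bool := (i.+1 < j) || (j.+1 < i).
Definition not_adj (k : nat) (i j : 'I_k) : bool := (i.+1 != j) && (j.+1 != i).

(* the defining relations of SB_n^+ (all except sigma sigma^-1 = 1) *)
Inductive pos_rel (k : nat) : word k -> word k -> Prop :=
| r_ss i j : far i j -> pos_rel [:: Sg i; Sg j] [:: Sg j; Sg i]
| r_xx i j : far i j -> pos_rel [:: Xg i; Xg j] [:: Xg j; Xg i]
| r_xs i j : not_adj i j -> pos_rel [:: Xg i; Sg j] [:: Sg j; Xg i]
| r_braid i j : val j = (val i).+1 ->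
    pos_rel [:: Sg i; Sg j; Sg i] [:: Sg j; Sg i; Sg j]
| r_ssx i j : val j = (val i).+1 ->
    pos_rel [:: Sg i; Sg j; Xg i] [:: Xg j; Sg i; Sg j]
| r_ssx' i j : val j = (val i).+1 ->
    pos_rel [:: Sg j; Sg i; Xg j] [:: Xg i; Sg j; Sg i].

Inductive sb_rel (k : nat) : word k -> word k -> Prop :=
| r_pos l r : pos_rel l r -> sb_rel l r
| r_inv1 i : sb_rel [:: Sg i; Si i] [::]
| r_inv2 i : sb_rel [:: Si i; Sg i] [::].

Definition sbeq (k : nat) : word k -> word k -> Prop := cong (@sb_rel k).
Definition peq (k : nat) : word k -> word k -> Prop := cong (@pos_rel k).

Definition is_pos_letter (k : nat) (a : letter k) : bool :=
  if a is Si _ then false else true.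
Definition positive (k : nat) (w : word k) : bool := all (@is_pos_letter k) w.

Definition rank (k : nat) (a : letter k) : nat :=
  match a with Sg i => val i | Xg i => k + val i | Si i => 2 * k + val i end.

Fixpoint lexlt (k : nat) (s t : word k) : bool :=
  match s, t with
  | [::], [::] => false
  | [::], _ :: _ => true
  | _ :: _, [::] => false
  | a :: s', b :: t' =>
      (rank a < rank b) || ((rank a == rank b) && lexlt s' t')
  end.

(* Delta = sigma_1..sigma_{n-1} sigma_1..sigma_{n-2} ... sigma_1 sigma_2 sigma_1 *)
Definition delta (k : nat) : word k :=
  flatten [seq [seq Sg j | j <- enum 'I_k & val j < t] | t <- rev (iota 1 k)].

Definition inv_letter (k : nat) (a : letter k) : letter k :=
  match a with Sg i => Si i | Si i => Sg i | Xg i => Xg i end.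
Definition inv_word (k : nat) (w : word k) : word k := rev (map (@inv_letter k) w).

Definition delta_pow (k : nat) (m : int) : word k :=
  match m with
  | Posz p => flatten (nseq p (delta k))
  | Negz p => flatten (nseq p.+1 (inv_word (delta k)))
  end.

Definition garside_nf (k : nat) (W : word k) (m : int) (A : word k) : Prop :=
  [/\ positive A,
      sbeq W (delta_pow k m ++ A),
      ~ (exists Z : word k, positive Z /\ peq A (delta k ++ Z)) &
      forall B : word k, positive B -> peq B A -> ~~ lexlt B A].

(* invertible elements of SB_n and conjugacy: v = g^-1 u g *)
Definition conjugate (k : nat) (u v : word k) : Prop :=
  exists g h : word k,
    [/\ sbeq (g ++ h) [::], sbeq (h ++ g) [::] & sbeq v (h ++ u ++ g)].

Definition summit_set (k : nat) (u : word k) (m : int) (A : word k) : Prop :=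
  exists W : word k,
    [/\ conjugate u W, garside_nf W m A &
        forall (W' : word k) (m' : int) (A' : word k),
          conjugate u W' -> garside_nf W' m' A' -> (m' <= m)%R].

(* Main.v *)
Require Import Defs.
From mathcomp Require Import all_boot all_order all_algebra.
From mathcomp Require Import zify.
From Stdlib Require Import Classical.
Set Implicit Arguments. Unset Strict Implicit. Unset Printing Implicit Defensive.
Import Order.TTheory GRing.Theory Num.Theory.

Section Cong.
Variable T : Type.
Variable R : seq T -> seq T -> Prop.

Lemma cong_ctx x y a b : cong R a b -> cong R (x ++ a ++ y) (x ++ b ++ y).
Proof.
elim=> [w|w1 w2 _ IH|w1 w2 w3 _ IH1 _ IH2|a' b' l r H].
- exact: cong_refl.
- exact: cong_sym.
- exact: cong_trans IH1 IH2.
- have E : forall z, x ++ (a' ++ z ++ b') ++ y = (x ++ a') ++ z ++ (b' ++ y).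
    by move=> z; rewrite !catA.
  rewrite !E; exact: cong_step.
Qed.

Lemma cong_cat a b c d : cong R a b -> cong R c d -> cong R (a ++ c) (b ++ d).
Proof.
move=> H1 H2; apply: (cong_trans (w2 := b ++ c)).
- by have := cong_ctx [::] c H1.
- by have := cong_ctx b [::] H2; rewrite !cats0.
Qed.

Lemma cong_rel l r : R l r -> cong R l r.
Proof. by move=> H; have := cong_step [::] [::] H; rewrite /= !cats0. Qed.

Lemma cong_mono (R' : seq T -> seq T -> Prop) a b :
  (forall l r, R l r -> R' l r) -> cong R a b -> cong R' a b.
Proof.
move=> HR; elim=> [w|w1 w2 _ IH|w1 w2 w3 _ IH1 _ IH2|a' b' l r H].
- exact: cong_refl.
- exact: cong_sym.
- exact: cong_trans IH1 IH2.
- exact/cong_step/HR.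
Qed.

Lemma cong_inv (X : Type) (f : seq T -> X) (op : X -> X -> X) a b :
  (forall s t, f (s ++ t) = op (f s) (f t)) ->
  (forall l r, R l r -> f l = f r) -> cong R a b -> f a = f b.
Proof.
move=> Hc HR; elim=> [w|w1 w2 _ IH|w1 w2 w3 _ IH1 _ IH2|a' b' l r H] //.
- by rewrite IH1.
- by rewrite !Hc (HR _ _ H).
Qed.
End Cong.

Lemma peq_sbeq k (a b : word k) : peq a b -> sbeq a b.
Proof. apply: cong_mono; exact: r_pos. Qed.

Section Conj.
Variable k : nat.
Implicit Types u v w g h a b c d : word k.

Lemma sb_refl u : sbeq u u. Proof. exact: cong_refl. Qed.
Lemma sb_sym u v : sbeq u v -> sbeq v u. Proof. exact: cong_sym. Qed.
Lemma sb_trans v u w : sbeq u v -> sbeq v w -> sbeq u w. Proof. exact: cong_trans. Qed.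
Lemma sb_cat a b c d : sbeq a b -> sbeq c d -> sbeq (a ++ c) (b ++ d).
Proof. exact: cong_cat. Qed.

Lemma conj_refl u : conjugate u u.
Proof. by exists [::], [::]; split; rewrite ?cats0; apply: sb_refl. Qed.

Lemma conj_sbeq u v : sbeq u v -> conjugate u v.
Proof. by move=> H; exists [::], [::]; split; rewrite /= ?cats0; [apply: sb_refl|apply: sb_refl|apply: sb_sym]. Qed.

Lemma conj_sym u v : conjugate u v -> conjugate v u.
Proof.
case=> g [h] [H1 H2 H3]; exists h, g; split => //.
apply: (sb_trans (v := g ++ (h ++ u ++ g) ++ h)).
- have : sbeq u ((g ++ h) ++ u ++ (g ++ h)).
    apply: sb_sym; have := sb_cat H1 (sb_cat (sb_refl u) H1).
    by rewrite /= cats0.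
  by rewrite !catA.
- by apply: sb_cat (sb_refl _) (sb_cat (sb_sym H3) (sb_refl _)).
Qed.

Lemma conj_trans v u w : conjugate u v -> conjugate v w -> conjugate u w.
Proof.
case=> g [h] [H1 H2 H3]; case=> g' [h'] [H1' H2' H3'].
exists (g ++ g'), (h' ++ h); split.
- have := sb_cat (sb_refl g) (sb_cat H1' (sb_refl h)); rewrite /= -!catA => H.
  exact: sb_trans H H1.
- have := sb_cat (sb_refl h') (sb_cat H2 (sb_refl g')); rewrite /= -!catA => H.
  exact: sb_trans H H2'.
- apply: sb_trans H3' _.
  have := sb_cat (sb_refl h') (sb_cat H3 (sb_refl g')); by rewrite -!catA.
Qed.
End Conj.

Inductive pl := PS of nat | PX of nat.
Definition idx (a : pl) := match a with PS i => i | PX i => i end.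
Definition setidx (a : pl) j := match a with PS _ => PS j | PX _ => PX j end.
Lemma idx_set a j : idx (setidx a j) = j. Proof. by case: a. Qed.
Lemma set_set a j j' : setidx (setidx a j) j' = setidx a j'. Proof. by case: a. Qed.

Section PL.
Variable K : nat.
Local Notation k := K.+1.

Definition toL (a : pl) : letter k :=
  match a with PS i => Sg (inord i) | PX i => Xg (inord i) end.
Definition I (w : seq pl) : word k := map toL w.
Definition pe (s t : seq pl) := peq (I s) (I t).

Lemma pe_refl s : pe s s. Proof. exact: cong_refl. Qed.
Lemma pe_sym s t : pe s t -> pe t s. Proof. exact: cong_sym. Qed.
Lemma pe_trans t s u : pe s t -> pe t u -> pe s u. Proof. exact: cong_trans. Qed.
Lemma pe_cat a b c d : pe a b -> pe c d -> pe (a ++ c) (b ++ d).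
Proof. by rewrite /pe /I !map_cat; apply: cong_cat. Qed.
Lemma pe_catl a c d : pe c d -> pe (a ++ c) (a ++ d).
Proof. exact: pe_cat (pe_refl a). Qed.
Lemma pe_catr a b c : pe a b -> pe (a ++ c) (b ++ c).
Proof. by move=> H; apply: pe_cat H (pe_refl c). Qed.

Lemma pe_ss i j : i < k -> j < k -> (i.+1 < j) || (j.+1 < i) ->
  pe [:: PS i; PS j] [:: PS j; PS i].
Proof. by move=> hi hj h; apply/cong_rel/r_ss; rewrite /far !inordK. Qed.

Lemma pe_xs i j : i < k -> j < k -> (i.+1 != j) && (j.+1 != i) ->
  pe [:: PX i; PS j] [:: PS j; PX i].
Proof. by move=> hi hj h; apply/cong_rel/r_xs; rewrite /not_adj !inordK. Qed.

Lemma pe_braid i : i.+1 < k -> pe [:: PS i; PS i.+1; PS i] [:: PS i.+1; PS i; PS i.+1].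
Proof. by move=> h; apply/cong_rel/r_braid; rewrite /= !inordK //; lia. Qed.
Lemma pe_ssx i : i.+1 < k -> pe [:: PS i; PS i.+1; PX i] [:: PX i.+1; PS i; PS i.+1].
Proof. by move=> h; apply/cong_rel/r_ssx; rewrite /= !inordK //; lia. Qed.
Lemma pe_ssx' i : i.+1 < k -> pe [:: PS i.+1; PS i; PX i.+1] [:: PX i; PS i.+1; PS i].
Proof. by move=> h; apply/cong_rel/r_ssx'; rewrite /= !inordK //; lia. Qed.

Definition farp a j := (j < k) && (((idx a).+1 < j) || (j.+1 < idx a)).

Lemma pe_comm1 a j : idx a < k -> farp a j -> pe [:: a; PS j] [:: PS j; a].
Proof.
case: a => i /= hi /andP[hj h]; first exact: pe_ss.
move: h => /= h; by apply: pe_xs => //; apply/andP; split; apply/eqP; lia.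
Qed.

Lemma pe_commw a js : idx a < k -> all (farp a) js ->
  pe (a :: map PS js) (map PS js ++ [:: a]).
Proof.
move=> ha; elim: js => [|j js IH] /=; first by move=> _; apply: pe_refl.
case/andP=> hj hjs.
apply: (pe_trans (t := [:: PS j; a] ++ map PS js)).
- by apply: (pe_catr (a := [:: a; PS j])); exact: pe_comm1.
- by apply: (pe_catl [:: PS j]); exact: IH.
Qed.

Lemma pe_mf a b X Y : pe (X ++ [:: a]) (b :: X) -> pe (X ++ a :: Y) (b :: X ++ Y).
Proof. by move=> H; have := pe_catr Y H; rewrite -catA. Qed.

Lemma pe_B a t : (idx a).+1 < t -> t <= k ->
  pe (map PS (iota 0 t) ++ [:: a]) (setidx a (idx a).+1 :: map PS (iota 0 t)).
Proof.
move=> hi ht; set i := idx a; set r := t - i.+2.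
have -> : t = i + (2 + r) by rewrite /r; lia.
rewrite iotaD iotaD /= add0n !map_cat -!catA /=.
set a' := setidx a i.+1.
apply: (pe_trans (t := map PS (iota 0 i) ++ [:: PS i, PS i.+1 & a :: map PS (iota (i + 2) r)])).
  apply: pe_catl; apply: (pe_catl [:: PS i; PS i.+1]); apply: pe_sym.
  apply: pe_commw; first by rewrite /i; lia.
  apply/allP=> j; rewrite mem_iota /farp => /andP[h1 h2]; apply/andP; split; rewrite -/i; lia.
apply: (pe_trans (t := map PS (iota 0 i) ++ [:: a'; PS i; PS i.+1] ++ map PS (iota (i + 2) r))).
  apply: pe_catl; apply: (@pe_catr [:: PS i; PS i.+1; a]).
  rewrite /a' /i; case: a hi {i r a'} => j /= hj.
  - apply: pe_braid; lia.
  - apply: pe_ssx; lia.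
apply: pe_mf; apply: pe_sym.
apply: pe_commw; first by rewrite /a' idx_set; lia.
apply/allP=> j; rewrite mem_iota /farp /a' idx_set => /andP[h1 h2]; apply/andP; split; lia.
Qed.

Lemma pe_C_gen a a' j t : idx a = j.+1 -> idx a' = j -> j.+1 < t -> t <= k ->
  pe [:: PS j.+1; PS j; a] [:: a'; PS j.+1; PS j] ->
  pe (map PS (rev (iota 0 t)) ++ [:: a]) (a' :: map PS (rev (iota 0 t))).
Proof.
move=> ha ha' hi ht Hm.
set r := t - j.+2.
have E : rev (iota 0 t) = rev (iota (j + 2) r) ++ [:: j.+1; j] ++ rev (iota 0 j).
  have -> : t = j + (2 + r) by rewrite /r; lia.
  by rewrite iotaD add0n iotaD !rev_cat -!catA.
rewrite E !map_cat -!catA /=.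
apply: (pe_trans (t := map PS (rev (iota (j + 2) r)) ++ [:: PS j.+1, PS j & a :: map PS (rev (iota 0 j))])).
  apply: pe_catl; apply: (pe_catl [:: PS j.+1; PS j]); apply: pe_sym.
  apply: pe_commw; first by lia.
  apply/allP=> x; rewrite mem_rev mem_iota /farp => /andP[h1 h2]; apply/andP; split; lia.
apply: (pe_trans (t := map PS (rev (iota (j + 2) r)) ++ [:: a'; PS j.+1; PS j] ++ map PS (rev (iota 0 j)))).
  apply: pe_catl; exact: (@pe_catr [:: PS j.+1; PS j; a]).
apply: pe_mf; apply: pe_sym.
apply: pe_commw; first by lia.
apply/allP=> x; rewrite mem_rev mem_iota /farp => /andP[h1 h2]; apply/andP; split; lia.
Qed.

Lemma pe_C a t : 0 < idx a -> idx a < t -> t <= k ->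
  pe (map PS (rev (iota 0 t)) ++ [:: a]) (setidx a (idx a).-1 :: map PS (rev (iota 0 t))).
Proof.
case: a => x /= h0 hi ht; case: x h0 hi => [//|j] _ hi /=.
- apply: (pe_C_gen (j := j)) => //; apply: pe_sym; apply: pe_braid; lia.
- apply: (pe_C_gen (j := j)) => //; apply: pe_ssx'; lia.
Qed.

Fixpoint Dn t := if t is s.+1 then iota 0 s.+1 ++ Dn s else [::].

Lemma Dn_lt t : all (fun j => j < t) (Dn t).
Proof.
elim: t => [//|t IH] /=; rewrite all_cat; apply/andP; split.
- by apply/allP=> x; rewrite mem_iota; lia.
- by apply: sub_all IH => x /= h; lia.
Qed.

Lemma rev_iotaS t : rev (iota 0 t.+1) = t :: rev (iota 0 t).
Proof. by rewrite -addn1 iotaD rev_cat. Qed.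

Lemma DnS t : Dn t.+1 = iota 0 t.+1 ++ Dn t. Proof. by []. Qed.

Lemma pe_D1 t : t.+1 <= k ->
  pe (map PS (Dn t.+1)) (map PS (Dn t ++ rev (iota 0 t.+1))).
Proof.
elim: t => [|s IH] hs; first exact: pe_refl.
have IH' := IH (ltnW hs).
rewrite (DnS s.+1) map_cat.
apply: (pe_trans (t := map PS (iota 0 s.+2) ++ map PS (Dn s ++ rev (iota 0 s.+1)))).
  exact: pe_catl.
rewrite (DnS s) (rev_iotaS s.+1) -(addn1 s.+1) iotaD !map_cat -!catA.
apply: pe_catl.
rewrite add0n /=.
apply: pe_sym; apply: pe_mf; apply: pe_sym; apply: pe_commw => //.
apply: sub_all (Dn_lt s) => x /= h; rewrite /farp /=; lia.
Qed.

Definition tau t a := setidx a (t.-1 - idx a).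

Lemma pe_D2 t a : idx a < t -> t <= k ->
  pe (map PS (Dn t) ++ [:: a]) (tau t a :: map PS (Dn t)).
Proof.
elim: t a => [|t IH] a ha ht; first by lia.
case: t IH ha ht => [|s] IH ha ht.
  case: a ha => x /= hx; have -> : x = 0 by lia.
  - exact: pe_refl.
  - by apply: pe_sym; apply: pe_xs.
case: (ltnP (idx a) s.+1) => hi.
- rewrite DnS map_cat -catA.
  apply: (pe_trans (t := map PS (iota 0 s.+2) ++ (tau s.+1 a :: map PS (Dn s.+1)))).
    by apply: pe_catl; apply: IH => //; lia.
  have E : tau s.+2 a = setidx (tau s.+1 a) (idx (tau s.+1 a)).+1.
    by rewrite /tau idx_set set_set /=; congr (setidx a _); lia.
  rewrite E; apply: pe_mf; apply: pe_B => //.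
  rewrite /tau idx_set /=; lia.
- have hia : idx a = s.+1 by lia.
  have D1 := pe_D1 ht.
  apply: (pe_trans (t := map PS (Dn s.+1 ++ rev (iota 0 s.+2)) ++ [:: a])).
    exact: pe_catr.
  rewrite map_cat -catA.
  apply: (pe_trans (t := map PS (Dn s.+1) ++ (setidx a (idx a).-1 :: map PS (rev (iota 0 s.+2))))).
    by apply: pe_catl; apply: pe_C => //; lia.
  apply: (pe_trans (t := tau s.+1 (setidx a (idx a).-1) :: map PS (Dn s.+1) ++ map PS (rev (iota 0 s.+2)))).
    by apply: pe_mf; apply: IH; rewrite ?idx_set; lia.
  have E : tau s.+1 (setidx a (idx a).-1) = tau s.+2 a.
    by rewrite /tau idx_set set_set hia /= !subnn.
  rewrite E; apply: (pe_catl [:: tau s.+2 a]); rewrite -map_cat; exact: pe_sym.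
Qed.

Lemma pe_D3 w : all (fun a => idx a < k) w ->
  pe (map PS (Dn k) ++ w) (map (tau k) w ++ map PS (Dn k)).
Proof.
elim: w => [|a w IH]; first by rewrite /= cats0 => _; apply: pe_refl.
move=> /andP[ha hw].
apply: (pe_trans (t := tau k a :: map PS (Dn k) ++ w)).
  by apply: pe_mf; apply: pe_D2.
exact: (pe_catl [:: tau k a] (IH hw)).
Qed.

Lemma tau_lt a : idx (tau k a) < k.
Proof. rewrite /tau idx_set; lia. Qed.

Lemma pe_div t j : j < t -> t <= k -> exists Q, pe (map PS (Dn t)) (PS j :: Q).
Proof.
elim: t j => [|t IH] j hj ht; first by lia.
case: j hj => [|j] hj.
  by exists (map PS (iota 1 t ++ Dn t)); apply: pe_refl.
have [Q HQ] := IH j hj (ltnW ht).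
exists (map PS (iota 0 t.+1) ++ Q).
rewrite DnS map_cat.
apply: (pe_trans (t := map PS (iota 0 t.+1) ++ PS j :: Q)); first exact: pe_catl.
have H := @pe_B (PS j) t.+1 hj ht.
exact: (pe_mf Q H).
Qed.

End PL.

Definition ev k (a : letter k) : int := match a with Sg _ => 1 | Si _ => -1 | Xg _ => 0 end.
Definition e k (w : word k) : int := foldr (fun a z => (ev a + z)%R) 0%R w.

Lemma e_cat k (s t : word k) : e (s ++ t) = (e s + e t)%R.
Proof. by elim: s => [|a s IH] /=; rewrite ?add0r // IH addrA. Qed.

Lemma e_sb k (a b : word k) : sbeq a b -> e a = e b.
Proof.
apply: (cong_inv (op := fun x y => (x + y)%R)); first exact: e_cat.
move=> l r [{}l {}r []|i|i] //=.
Qed.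

Lemma filter_iota_lt s m n : s <= m -> filter (fun x => x < s) (iota m n) = [::].
Proof. elim: n m => [//|n IH] m h /=; rewrite ltnNge h /=; apply: IH; lia. Qed.

Section Main.
Variable K : nat.
Local Notation k := K.+1.

Lemma F_eq s : s <= k ->
  [seq Sg j | j <- enum 'I_k & val j < s] = I K (map PS (iota 0 s)).
Proof.
move=> hs.
have Hf : [seq j <- enum 'I_k | val j < s] = map inord (iota 0 s).
  apply: (inj_map val_inj).
  have E := filter_map val (fun x => x < s) (enum 'I_k).
  rewrite val_enum_ord in E.
  transitivity (filter (fun x => x < s) (iota 0 k)); first by rewrite E.
  have -> : iota 0 k = iota 0 s ++ iota s (k - s) by rewrite -iotaD subnKC.
  rewrite filter_cat (@filter_iota_lt s s (k - s) (leqnn s)) cats0.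
  have /all_filterP -> : all (fun x => x < s) (iota 0 s).
    by apply/allP => x; rewrite mem_iota; lia.
  rewrite -map_comp -[LHS]map_id; apply/eq_in_map => x.
  rewrite mem_iota => hx /=; rewrite inordK //; lia.
rewrite Hf /I -!map_comp; exact: eq_map.
Qed.

Lemma delta_eq : delta k = I K (map PS (Dn k)).
Proof.
have : forall t, t <= k ->
  flatten [seq [seq Sg j | j <- enum 'I_k & val j < s] | s <- rev (iota 1 t)] = I K (map PS (Dn t)).
  elim=> [//|t IH] ht.
  rewrite (_ : rev (iota 1 t.+1) = t.+1 :: rev (iota 1 t)); last first.
    by rewrite -(addn1 t) iotaD rev_cat add1n addn1.
  rewrite DnS map_cat /I map_cat -/(I K _) -/(I K _) -IH; last by lia.
  by rewrite -F_eq.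
by apply.
Qed.

Lemma sb_rel1 l r : sb_rel l r -> sbeq (k := k) l r.
Proof. exact: cong_rel. Qed.

Lemma inv_cancel (js : seq 'I_k) :
  sbeq (map (@Sg k) js ++ inv_word (map (@Sg k) js)) [::] /\
  sbeq (inv_word (map (@Sg k) js) ++ map (@Sg k) js) [::].
Proof.
elim: js => [|j js [IH1 IH2]]; first by split; apply: sb_refl.
have E : inv_word (map (@Sg k) (j :: js)) = inv_word (map (@Sg k) js) ++ [:: Si j].
  by rewrite /inv_word /= rev_cons cats1.
rewrite E; split.
- have H := sb_cat (sb_refl [:: Sg j]) (sb_cat IH1 (sb_refl [:: Si j])).
  rewrite /= -catA /= in H; apply: sb_trans H _.
  exact: cong_rel (r_inv1 j).
- have H := sb_cat (sb_refl (inv_word (map (@Sg k) js))) (sb_cat (cong_rel (r_inv2 j)) (sb_refl (map (@Sg k) js))).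
  rewrite /= in H; rewrite -catA /=; apply: sb_trans H _; exact: IH2.
Qed.

Lemma delta_sg : delta k = map (@Sg k) (map inord (Dn k)).
Proof. by rewrite delta_eq /I -!map_comp. Qed.

Local Notation Di := (inv_word (delta k)).

Lemma sb_dDi : sbeq (delta k ++ Di) [::].
Proof. by rewrite delta_sg; case: (inv_cancel (map inord (Dn k))). Qed.
Lemma sb_Did : sbeq (Di ++ delta k) [::].
Proof. by rewrite delta_sg; case: (inv_cancel (map inord (Dn k))). Qed.

Definition toPL (a : letter k) : pl :=
  match a with Sg i => PS i | Xg i => PX i | Si i => PS i end.

Lemma I_toPL (w : word k) : positive w -> I K (map toPL w) = w.
Proof.
elim: w => [//|a w IH] /= /andP[ha hw]; rewrite IH //.
by case: a ha => i //= _; rewrite inord_val.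
Qed.

Lemma toPL_lt (w : word k) : all (fun a => idx a < k) (map toPL w).
Proof. elim: w => [//|a w IH] /=; rewrite IH andbT; case: a => i; exact: ltn_ord. Qed.

Lemma I_pos s : positive (I K s).
Proof. by elim: s => [//|[] i s IH]. Qed.

Lemma move1 (w : word k) : positive w ->
  exists w', positive w' /\ sbeq (w ++ Di) (Di ++ w').
Proof.
move=> hw.
have E1 : I K (map PS (Dn k) ++ map toPL w) = delta k ++ w.
  by rewrite delta_eq -{2}(I_toPL hw) /I map_cat.
have E2 : I K (map (tau k) (map toPL w) ++ map PS (Dn k)) =
    I K (map (tau k) (map toPL w)) ++ delta k by rewrite delta_eq /I map_cat.
have D3 : peq (delta k ++ w) (I K (map (tau k) (map toPL w)) ++ delta k).
  rewrite -E1 -E2; exact: pe_D3 (toPL_lt w).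
exists (I K (map (tau k) (map toPL w))); split; first exact: I_pos.
set w' := I K _ in D3 *.
apply: (sb_trans (v := (Di ++ delta k) ++ w ++ Di)).
  by have := sb_cat (sb_sym sb_Did) (sb_refl (w ++ Di)).
apply: (sb_trans (v := Di ++ (w' ++ delta k) ++ Di)).
  have -> : (Di ++ delta k) ++ w ++ Di = Di ++ (delta k ++ w) ++ Di by rewrite !catA.
  exact: sb_cat (sb_refl _) (sb_cat (peq_sbeq D3) (sb_refl _)).
rewrite -catA; have := sb_cat (sb_refl (Di ++ w')) sb_dDi; by rewrite cats0 -!catA.
Qed.

Definition Dip p := flatten (nseq p Di).

Lemma moveP p (w : word k) : positive w ->
  exists w', positive w' /\ sbeq (w ++ Dip p) (Dip p ++ w').
Proof.
elim: p w => [|p IH] w hw.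
  by exists w; split => //; rewrite /Dip /= cats0; apply: sb_refl.
have [w1 [hw1 H1]] := move1 hw.
have [w2 [hw2 H2]] := IH w1 hw1.
exists w2; split => //.
rewrite /Dip /= -/(Dip p).
apply: (sb_trans (v := (Di ++ w1) ++ Dip p)).
  by rewrite catA; apply: sb_cat H1 (sb_refl _).
rewrite -catA -catA; exact: sb_cat (sb_refl _) H2.
Qed.

Lemma sigma_inv (i : 'I_k) : exists Q : word k, positive Q /\ sbeq [:: Si i] (Q ++ Di).
Proof.
have [Q HQ] := pe_div (ltn_ord i) (leqnn k).
have {}HQ : peq (delta k) (Sg i :: I K Q).
  rewrite delta_eq -{1}(inord_val i); exact: HQ.
exists (I K Q); split; first exact: I_pos.
apply: (sb_trans (v := [:: Si i] ++ delta k ++ Di)).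
  by have := sb_cat (sb_refl [:: Si i]) (sb_sym sb_dDi); rewrite cats0.
apply: (sb_trans (v := ([:: Si i] ++ (Sg i :: I K Q)) ++ Di)).
  by rewrite -catA; apply: sb_cat (sb_refl _) (sb_cat (peq_sbeq HQ) (sb_refl _)).
have H := sb_cat (cong_rel (r_inv2 i)) (sb_refl (I K Q ++ Di)); simpl in H; simpl; exact: H.
Qed.

Lemma exists_rep (W : word k) :
  exists p A, positive A /\ sbeq W (Dip p ++ A).
Proof.
elim: W => [|a W [p [A [hA HW]]]]; first by exists 0, [::]; split => //; apply: sb_refl.
have HaW : sbeq (a :: W) ([:: a] ++ Dip p ++ A) by apply: sb_cat (sb_refl [:: a]) HW.
case: a HaW => i HaW.
- have [w' [hw' H]] := @moveP p [:: Sg i] isT.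
  exists p, (w' ++ A); split; first by rewrite /positive all_cat; apply/andP.
  apply: sb_trans HaW _; rewrite catA (catA (Dip p)); exact: sb_cat H (sb_refl _).
- have [Q [hQ HQ]] := sigma_inv i.
  have [w' [hw' H]] := @moveP p.+1 Q hQ.
  exists p.+1, (w' ++ A); split; first by rewrite /positive all_cat; apply/andP.
  apply: sb_trans HaW _.
  apply: (sb_trans (v := (Q ++ Dip p.+1) ++ A)).
    rewrite catA; apply: sb_cat (sb_refl _).
    rewrite /Dip /= catA; exact: sb_cat HQ (sb_refl _).
  rewrite catA; exact: sb_cat H (sb_refl _).
- have [w' [hw' H]] := @moveP p [:: Xg i] isT.
  exists p, (w' ++ A); split; first by rewrite /positive all_cat; apply/andP.
  apply: sb_trans HaW _; rewrite catA (catA (Dip p)); exact: sb_cat H (sb_refl _).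
Qed.

End Main.

Lemma nat_min (P : nat -> Prop) :
  (exists n, P n) -> exists n, P n /\ forall m, P m -> n <= m.
Proof.
case=> n; elim: n {-2}n (leqnn n) => [|N IH] n hn Pn.
- exists n; split => // m _; lia.
- case: (classic (exists m, m < n /\ P m)) => [[m [hm Pm]]|H].
  + apply: (IH m) => //; lia.
  + exists n; split => // m Pm; case: (leqP n m) => // hmn.
    by exfalso; apply: H; exists m.
Qed.

Lemma int_max (P : int -> Prop) (b : int) :
  (exists m, P m) -> (forall m, P m -> (m <= b)%R) ->
  exists m, P m /\ forall m', P m' -> (m' <= m)%R.
Proof.
move=> [m0 P0] hb.
have ex : exists d, exists m, P m /\ (b - m)%R = Posz d.
  exists `|b - m0|%N, m0; split => //; have := hb m0 P0; lia.
have [d [[m [Pm hd]] hmin]] := nat_min ex.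
exists m; split => // m' Pm'.
have hb' := hb m' Pm'.
have h1 : exists m, P m /\ (b - m)%R = Posz `|b - m'|%N.
  exists m'; split => //; lia.
have := hmin _ h1; lia.
Qed.

Fixpoint code k (w : word k) : nat :=
  match w with [::] => 0 | a :: s => rank a * (3 * k) ^ size s + code s end.

Lemma rank_lt k (a : letter k) : rank a < 3 * k.
Proof. case: a => i /=; have := ltn_ord i; lia. Qed.

Lemma code_lt k (w : word k) : code w < (3 * k) ^ size w.
Proof.
elim: w => [|a w IH] /=; first by rewrite expn0.
rewrite expnS; have := rank_lt a; nia.
Qed.

Lemma lex_code k (s t : word k) : size s = size t -> lexlt s t -> code s < code t.
Proof.
elim: s t => [|a s IH] [|b t] //= [hsz].
case/orP => [h | /andP[/eqP he hl]].
- have := code_lt s; rewrite hsz => hs.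
  have := leq_mul h (leqnn ((3 * k) ^ size t)); nia.
- have := IH t hsz hl; rewrite hsz he; lia.
Qed.

Lemma peq_size k (a b : word k) : peq a b -> size a = size b.
Proof.
apply: (cong_inv (op := addn)); first exact: size_cat.
by move=> l r [].
Qed.

Lemma flat_comm T (d : seq T) p : flatten (nseq p d) ++ d = d ++ flatten (nseq p d).
Proof. by elim: p => [|p IH] /=; rewrite ?cats0 // -catA IH. Qed.

Section Main2.
Variable K : nat.
Local Notation k := K.+1.
Local Notation Di := (inv_word (delta k)).

Lemma e_pos (A : word k) : positive A -> (0 <= e A)%R.
Proof. elim: A => [//|a A IH] /= /andP[ha hA]; have := IH hA; case: a ha => i //= _; lia. Qed.

Lemma e_rev (s : word k) : e (rev s) = e s.
Proof. elim: s => [//|a s IH]; rewrite rev_cons -cats1 e_cat IH /=; lia. Qed.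

Lemma e_inv (s : word k) : e (inv_word s) = (- e s)%R.
Proof.
rewrite /inv_word e_rev; elim: s => [|a s IH] /=; first by rewrite oppr0.
rewrite IH; case: a => i /=; lia.
Qed.

Lemma e_sg (js : seq 'I_k) : e (map (@Sg k) js) = Posz (size js).
Proof. elim: js => [//|j js IH] /=; rewrite IH; lia. Qed.

Lemma e_delta_ge1 : (1 <= e (delta k))%R.
Proof. rewrite delta_sg e_sg size_map DnS size_cat size_iota; lia. Qed.

Lemma e_dpow m : e (delta_pow k m) = (m * e (delta k))%R.
Proof.
case: m => [p|q]; rewrite /delta_pow.
- elim: p => [|p IH] /=; first by rewrite mul0r.
  rewrite e_cat IH; nia.
- have -> : forall r, e (flatten (nseq r Di)) = (Posz r * (- e (delta k)))%R.
    elim=> [|r IH] /=; first by rewrite mul0r.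
    rewrite e_cat IH e_inv; nia.
  rewrite NegzE; nia.
Qed.

Lemma rep_bound (W A : word k) m : positive A -> sbeq W (delta_pow k m ++ A) ->
  (m <= e W * e W)%R.
Proof.
move=> hA hW; have := e_sb hW; rewrite e_cat e_dpow => hE.
have h1 := e_pos hA; have h2 := e_delta_ge1.
have h3 : (m * e (delta k) <= e W)%R by lia.
have [h|h] : (m <= 0 \/ 1 <= m)%R by lia.
- have : (0 <= e W * e W)%R by nia. lia.
- have : (m <= m * e (delta k))%R by nia. have : (e W <= e W * e W)%R by nia. lia.
Qed.

Lemma dpow_succ m : sbeq (delta_pow k m ++ delta k) (delta_pow k (m + 1)).
Proof.
case: m => [p|q].
- have -> : (Posz p + 1)%R = Posz p.+1 by lia.
  rewrite /delta_pow /= flat_comm; exact: sb_refl.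
- have H : sbeq (delta_pow k (Negz q) ++ delta k) (flatten (nseq q Di)).
    rewrite /delta_pow; rewrite (_ : flatten (nseq q.+1 Di) = flatten (nseq q Di) ++ Di); last first.
      by rewrite flat_comm.
    rewrite -catA; have := sb_cat (sb_refl (flatten (nseq q Di))) (@sb_Did K); by rewrite cats0.
  case: q H => [|q] H.
  + have -> : (Negz 0 + 1)%R = Posz 0 by rewrite NegzE; lia.
    exact: H.
  + have -> : (Negz q.+1 + 1)%R = Negz q by rewrite !NegzE; lia.
    exact: H.
Qed.

Lemma nf_exists (W : word k) : exists m A, garside_nf W m A.
Proof.
pose P m := exists A, positive A /\ sbeq W (delta_pow k m ++ A).
have ne : exists m, P m.
  have [p [A [hA HA]]] := exists_rep W.
  exists (if p is q.+1 then Negz q else 0%R), A; split => //.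
  by case: p HA.
have bd : forall m, P m -> (m <= e W * e W)%R.
  by move=> m [A [hA HA]]; exact: rep_bound hA HA.
have [m [[A [hA HA]] hmax]] := int_max ne bd.
pose Q d := exists B, positive B /\ peq B A /\ code B = d.
have [d [[B [hB [hBA hc]]] hmin]] := @nat_min Q (ex_intro _ (code A) (ex_intro _ A (conj hA (conj (cong_refl _ _) erefl)))).
exists m, B; split => //.
- apply: sb_trans HA _; apply: sb_cat (sb_refl _) _; apply: peq_sbeq; exact: cong_sym.
- case=> Z [hZ hZB].
  have : P (m + 1)%R.
    exists Z; split => //.
    apply: sb_trans HA _.
    apply: (sb_trans (v := (delta_pow k m ++ delta k) ++ Z)); last exact: sb_cat (dpow_succ m) (sb_refl _).
    rewrite -catA; apply: sb_cat (sb_refl _) _; apply: peq_sbeq.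
    exact: cong_trans (cong_sym hBA) hZB.
  move/hmax; lia.
- move=> B' hB' hB'B; apply/negP => hl.
  have := lex_code (peq_size hB'B) hl.
  have := hmin (code B') (ex_intro _ B' (conj hB' (conj (cong_trans hB'B hBA) erefl))).
  lia.
Qed.

Lemma conj_e (u W : word k) : conjugate u W -> e W = e u.
Proof.
case=> g [h] [H1 H2 H3].
have := e_sb H3; have := e_sb H2; rewrite !e_cat /=; lia.
Qed.

Lemma summit_ne (u : word k) : exists m A, summit_set u m A.
Proof.
pose P m := exists W A, conjugate u W /\ garside_nf W m A.
have ne : exists m, P m.
  have [m [A hA]] := nf_exists u; exists m, u, A; split => //; exact: conj_refl.
have bd : forall m, P m -> (m <= e u * e u)%R.
  move=> m [W [A [huW [hA HA _ _]]]].
  by rewrite -(conj_e huW); exact: rep_bound hA HA.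
have [m [[W [A [huW hnf]]] hmax]] := int_max ne bd.
exists m, A, W; split => // W' m' A' h1 h2.
by apply: hmax; exists W', A'.
Qed.

End Main2.

Lemma summit_conj k (u v : word k) m A :
  conjugate u v -> summit_set u m A -> summit_set v m A.
Proof.
move=> huv [W [huW hnf hmax]]; exists W; split => //.
- exact: conj_trans (conj_sym huv) huW.
- move=> W' m' A' hv hnf'; apply: hmax hnf'; exact: conj_trans huv hv.
Qed.

Theorem theorem3p2 (n : nat) (hn : 2 <= n) (u v : word n.-1) :
  conjugate u v <->
  (forall (m : int) (A : word n.-1), summit_set u m A <-> summit_set v m A).
Proof.
case: n hn u v => [|[|K]] // _ u v.
split.
- move=> huv m A; split; first exact: summit_conj.
  exact: summit_conj (conj_sym huv).
- move=> H.
  have [m [A hs]] := summit_ne u.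
  have hs' := (H m A).1 hs.
  case: hs => W [huW [_ HW _ _] _]; case: hs' => W' [hvW' [_ HW' _ _] _].
  apply: conj_trans huW _.
  apply: conj_trans (conj_sym hvW').
  apply: conj_sbeq; exact: sb_trans HW (sb_sym HW').
Qed.
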